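(* Fix $d>0$ and $J_d\ge1$, and assume (1) $t_i^{\max}(d)>0$ for all $i$ and (2) $\sum_{i=1}^Ub_i^{\min}(t_i^{\max}(d))\le B$ (with each $b_i^{\min}(t_i^{\max}(d))$ finite). Let $c_i=p_i^{\max}g_i/N_0$ and let $\boldsymbol b^{(0)}$ be the optimal solution of $$\min_{\boldsymbol b}\ \sum_{i=1}^U\frac{N_id}{b_i\log_2(1+c_i/b_i)}\quad\text{s.t.}\quad\sum_{i=1}^Ub_i\le B,\quad b_i\ge b_i^{\min}\big(t_i^{\max}(d)\big)\ \forall i.$$ Set $p_i^{(0)}=p_i^{\max}$, $t_i^{(0)}=\dfrac{N_id}{b_i^{(0)}\log_2(1+c_i/b_i^{(0)})}$ and $f_i^{(0)}=\dfrac{Z_id+(J_d-1)G_id}{T-J_dt_i^{(0)}}$. Then $J_dt_i^{(0)}<T$ and $(\boldsymbol t^{(0)},\boldsymbol b^{(0)},\boldsymbol p^{(0)},\boldsymbol f^{(0)})$ satisfies, for all $i$, $$\frac{Z_id+(J_d-1)G_id}{f_i}+J_dt_i\le T,\quad t_ib_i\log_2\!\Big(1+\frac{p_ig_i}{N_0b_i}\Big)\ge N_id,\quad\sum_{j}b_j\le B,\quad 0\le p_i\le p_i^{\max},\quad 0<f_i\le f_i^{\max},\quad b_i>0,\quad t_i\ge0.$$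
   Context: $U$ users; $t_i,b_i,p_i,f_i$ are user $i$'s per-round transmission time, bandwidth, transmit power and CPU frequency, with limits $p_i^{\max}>0$, $f_i^{\max}>0$; $g_i>0$ the channel power gain, $N_0>0$ the noise power spectral density, $N_i>0$ the number of classes (payload $N_id$ bits), $B>0$ the total bandwidth, $T>0$ the total time budget; $Z_i=D_iC_i^{(\mathrm{init})}>0$ and $G_i=D_iC_i^{(\mathrm{ret})}\ge0$ the per-dimension CPU cycles of the first round and each retraining round. Define $t_i^{\max}(d)=\big(T-\frac{Z_id+(J_d-1)G_id}{f_i^{\max}}\big)/J_d$ and, for $t>0$, $b_i^{\min}(t)=\inf\{b>0:\ t\,b\log_2(1+\frac{p_i^{\max}g_i}{N_0b})\ge N_id\}$. *)

(* Defs.v *)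
From HB Require Import structures.
From mathcomp Require Import all_boot all_order all_algebra.
From mathcomp Require Import all_classical all_reals all_analysis.
Set Implicit Arguments. Unset Strict Implicit. Unset Printing Implicit Defensive.
Import Order.TTheory GRing.Theory Num.Theory.
Local Open Scope classical_set_scope.
Local Open Scope ring_scope.

Definition log2 {R : realType} (x : R) : R := ln x / ln 2.

Definition rate {R : realType} (b p g N0 : R) : R := b * log2 (1 + p * g / (N0 * b)).

Definition cycles {R : realType} (Z G d : R) (J : nat) : R :=
  Z * d + (J%:R - 1) * G * d.

Definition tmax {R : realType} (T Z G fmax d : R) (J : nat) : R :=
  (T - cycles Z G d J / fmax) / J%:R.

Definition bfeas {R : realType} (t pmax g N0 Nd : R) : set R :=
  [set b | 0 < b /\ Nd <= t * rate b pmax g N0].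

Definition bmin {R : realType} (t pmax g N0 Nd : R) : R :=
  inf (bfeas t pmax g N0 Nd).

(* Main.v *)
Require Import Defs.
From HB Require Import structures.
From mathcomp Require Import all_boot all_order all_algebra.
From mathcomp Require Import all_classical all_reals all_analysis.
From mathcomp Require Import ring lra.
Import Order.TTheory GRing.Theory Num.Theory.
Local Open Scope classical_set_scope.
Local Open Scope ring_scope.
Section S.
Variable R : realType.
Lemma conc (a b s : R) : 0 < a -> 0 < b -> 0 <= s -> s <= 1 ->
  s * ln a + (1 - s) * ln b <= ln (s * a + (1 - s) * b).
Proof.
move=> a0 b0 s0 s1.
have := @concave_ln R (Itv01 s0 s1) a b a0 b0.
by rewrite !convRE /=.
Qed.

Definition hh (c b : R) := b * ln (1 + c / b).

Lemma hh_mono (c b1 b2 : R) : 0 < c -> 0 < b1 -> b1 <= b2 -> hh c b1 <= hh c b2.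
Proof.
move=> c0 b10 b12.
have b20 : 0 < b2 by lra.
have s0 : 0 <= b1 / b2 by rewrite divr_ge0 // ltW.
have s1 : b1 / b2 <= 1 by rewrite ler_pdivrMr // mul1r.
have a0 : 0 < 1 + c / b1 by rewrite addr_gt0 // divr_gt0.
have := @conc _ 1 _ a0 ltr01 s0 s1.
rewrite ln1 mulr0 addr0.
have -> : b1 / b2 * (1 + c / b1) + (1 - b1 / b2) * 1 = 1 + c / b2.
  by field; rewrite ?gt_eqF.
move=> H.
rewrite /hh.
have -> : b1 * ln (1 + c / b1) = b2 * (b1 / b2 * ln (1 + c / b1)).
  by field; rewrite gt_eqF.
by rewrite ler_pM2l.
Qed.

Lemma hh_lip (c x b : R) : 0 < c -> 0 < x -> x <= b -> hh c b <= hh c x + (b - x) * (c / x).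
Proof.
move=> c0 x0 xb.
have b0 : 0 < b by lra.
have cbx : c / b <= c / x by rewrite ler_pM2l // lef_pV2 ?posrE.
have cb0 : 0 < c / b by rewrite divr_gt0.
have L1 : ln (1 + c / b) <= ln (1 + c / x).
  by rewrite ler_ln ?posrE ?addr_gt0 ?divr_gt0 // lerD2l.
have L2 : ln (1 + c / b) <= c / x.
  apply: le_trans cbx; apply: le_ln1Dx; lra.
have P1 : 0 <= x * (ln (1 + c / x) - ln (1 + c / b)).
  by rewrite mulr_ge0 ?subr_ge0 // ltW.
have P2 : 0 <= (b - x) * (c / x - ln (1 + c / b)).
  by rewrite mulr_ge0 ?subr_ge0.
rewrite /hh; lra.
Qed.

Lemma key (t c K x : R) : 0 < t -> 0 < c -> 0 < K ->
  [set b | 0 < b /\ K <= t * hh c b] !=set0 ->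
  inf [set b | 0 < b /\ K <= t * hh c b] <= x -> 0 < x /\ K <= t * hh c x.
Proof.
move=> t0 c0 K0 ne hx.
set S := [set b | 0 < b /\ K <= t * hh c b].
pose y := 2 * c * t / K + 1.
have y0 : 0 < y by rewrite /y addr_gt0 // divr_gt0 // !mulr_gt0.
pose E := expR y.
have hE : 1 + y ^+ 2 / 2 <= E.
  have := @expR_ge1Dxn R y 1 (ltW y0).
  by [].
have E1 : 0 < E - 1.
  have : 0 < y ^+ 2 / 2 by rewrite divr_gt0 // exprn_gt0.
  lra.
pose m := c / (E - 1).
have m0 : 0 < m by rewrite divr_gt0.
have mE : m * (E - 1) = c by rewrite /m mulfVK // gt_eqF.
have hm : hh c m = m * y.
  rewrite /hh.
  have -> : 1 + c / m = E by rewrite /m invf_div mulrCA mulfV ?gt_eqF // mulr1; lra.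
  by rewrite /E expRK.
have h1 : m * (y ^+ 2 / 2) <= c by rewrite -mE ler_pM2l //; lra.
have h2 : 2 * c * t < K * y.
  rewrite /y mulrDr mulr1 mulrCA mulfV ?gt_eqF // mulr1; lra.
have htm : t * hh c m < K.
  rewrite hm.
  rewrite -(ltr_pM2r y0).
  have : t * (m * (y ^+ 2 / 2)) <= t * c by rewrite ler_pM2l.
  rewrite expr2.
  move=> h3.
  have -> : t * (m * y) * y = 2 * (t * (m * (y * y / 2))) by field.
  lra.
have lbm : lbound S m.
  move=> b [b0 Hb].
  have [//|bm] := leP m b.
  have := @hh_mono _ _ _ c0 b0 (ltW bm).
  move=> hb; have : t * hh c b <= t * hh c m by rewrite ler_pM2l.
  lra.
have mx : m <= x by apply: le_trans hx; apply: lb_le_inf.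
have x0 : 0 < x by lra.
split => //.
have [//|Hlt] := leP K (t * hh c x).
pose e := K - t * hh c x.
have e0 : 0 < e by rewrite /e subr_gt0.
pose del := e * x / (2 * t * c).
have del0 : 0 < del by rewrite /del divr_gt0 ?mulr_gt0.
have hdel : t * (del * (c / x)) = e / 2.
  by rewrite /del; field; rewrite ?gt_eqF.
have lbd : lbound S (x + del).
  move=> b [b0 Hb].
  have [//|bm] := leP (x + del) b.
  have [bx|xb] := leP b x.
    have := @hh_mono _ _ _ c0 b0 bx.
    move=> hb; have : t * hh c b <= t * hh c x by rewrite ler_pM2l.
    lra.
  have := @hh_lip _ _ _ c0 x0 (ltW xb).
  move=> hb.
  have : (b - x) * (c / x) <= del * (c / x).
    by rewrite ler_pM2r ?divr_gt0 //; lra.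
  move=> hb2.
  have : t * hh c b <= t * (hh c x + del * (c / x)).
    by rewrite ler_pM2l //; lra.
  rewrite mulrDr hdel.
  rewrite /e in e0 hdel *.
  lra.
have : x + del <= x by apply: le_trans hx; apply: lb_le_inf.
lra.
Qed.

Lemma rate_hh (b p g N0 : R) : rate b p g N0 = hh (p * g / N0) b / ln 2.
Proof. by rewrite /rate /log2 /hh invfM !mulrA. Qed.

Lemma ln2_gt0 : 0 < ln (2 : R).
Proof. by apply: ln_gt0; rewrite ltr1n. Qed.

Lemma bfeas_eq (t p g N0 Nd : R) : 0 < N0 ->
  bfeas t p g N0 Nd = [set b | 0 < b /\ Nd * ln 2 <= t * hh (p * g / N0) b].
Proof.
move=> N00; apply/seteqP; split => b /= [b0 H]; split => //.
  by move: H; rewrite rate_hh mulrA ler_pdivlMr // ln2_gt0.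
by rewrite rate_hh mulrA ler_pdivlMr // ln2_gt0.
Qed.
End S.
Arguments hh {R}.
Theorem proposition3 (R : realType) (U : nat)
  (pmax fmax g Z G : 'I_U -> R) (N : 'I_U -> nat) (N0 B T : R)
  (d J : nat) (b0 : 'I_U -> R)
  (hpmax : forall i, 0 < pmax i) (hfmax : forall i, 0 < fmax i)
  (hg : forall i, 0 < g i) (hN0 : 0 < N0) (hN : forall i, (0 < N i)%N)
  (hB : 0 < B) (hT : 0 < T) (hZ : forall i, 0 < Z i) (hG : forall i, 0 <= G i)
  (hd : (0 < d)%N) (hJ : (1 <= J)%N)
  (* (1) *)
  (h1 : forall i, 0 < tmax T (Z i) (G i) (fmax i) d%:R J)
  (* (2): each b_i^min(t_i^max(d)) finite (the defining set is nonempty) and their sum is <= B *)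
  (h2fin : forall i, bfeas (tmax T (Z i) (G i) (fmax i) d%:R J) (pmax i) (g i) N0
                      ((N i)%:R * d%:R) !=set0)
  (h2 : \sum_(i < U) bmin (tmax T (Z i) (G i) (fmax i) d%:R J) (pmax i) (g i) N0
                      ((N i)%:R * d%:R) <= B)
  (* b0 is an optimal solution of the bandwidth problem, with c_i = pmax_i g_i / N0 *)
  (hb0feas : \sum_(i < U) b0 i <= B /\
     forall i, bmin (tmax T (Z i) (G i) (fmax i) d%:R J) (pmax i) (g i) N0
                      ((N i)%:R * d%:R) <= b0 i)
  (hb0opt : forall b : 'I_U -> R,
     \sum_(i < U) b i <= B ->
     (forall i, bmin (tmax T (Z i) (G i) (fmax i) d%:R J) (pmax i) (g i) N0
                      ((N i)%:R * d%:R) <= b i) ->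
     \sum_(i < U) ((N i)%:R * d%:R / (b0 i * log2 (1 + (pmax i * g i / N0) / b0 i)))
     <= \sum_(i < U) ((N i)%:R * d%:R / (b i * log2 (1 + (pmax i * g i / N0) / b i)))) :
  let t0 := fun i => (N i)%:R * d%:R / (b0 i * log2 (1 + (pmax i * g i / N0) / b0 i)) in
  let p0 := pmax in
  let f0 := fun i => cycles (Z i) (G i) d%:R J / (T - J%:R * t0 i) in
  (forall i, J%:R * t0 i < T) /\
  (forall i,
     cycles (Z i) (G i) d%:R J / f0 i + J%:R * t0 i <= T /\
     (N i)%:R * d%:R <= t0 i * rate (b0 i) (p0 i) (g i) N0 /\
     \sum_(j < U) b0 j <= B /\
     0 <= p0 i <= pmax i /\
     0 < f0 i <= fmax i /\
     0 < b0 i /\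
     0 <= t0 i).

Proof.
move=> t0 p0 f0.
have N00 : 0 < N0 := hN0.
have l2 := @ln2_gt0 R.
have Jge1 : 1 <= (J%:R : R) by rewrite ler1n.
have d0 : 0 < (d%:R : R) by rewrite ltr0n.
have Hi : forall i, 0 < b0 i /\ 0 <= t0 i /\
    t0 i <= tmax T (Z i) (G i) (fmax i) d%:R J /\
    t0 i * rate (b0 i) (p0 i) (g i) N0 = (N i)%:R * d%:R.
  move=> i.
  set tm := tmax T (Z i) (G i) (fmax i) d%:R J.
  set Nd := (N i)%:R * d%:R.
  have tm0 : 0 < tm := h1 i.
  have Nd0 : 0 < Nd by rewrite /Nd mulr_gt0 // ltr0n.
  have c0 : 0 < pmax i * g i / N0 by rewrite !divr_gt0 ?mulr_gt0.
  have := h2fin i; have := proj2 hb0feas i.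
  rewrite /bmin bfeas_eq // => hinf hne.
  have [bp hK] := @key R _ _ _ (b0 i) tm0 c0 (mulr_gt0 Nd0 l2) hne hinf.
  have hpos : 0 < hh (pmax i * g i / N0) (b0 i).
    rewrite -(pmulr_rgt0 _ tm0); apply: lt_le_trans hK; exact: mulr_gt0.
  have ht0 : t0 i = Nd * ln 2 / hh (pmax i * g i / N0) (b0 i).
    by rewrite /t0 /log2 /hh mulrA -/Nd invf_div mulrA.
  split => //; split; first by rewrite ht0 ltW // divr_gt0 // mulr_gt0.
  split.
    by rewrite ht0 ler_pdivrMr // mulrC.
  rewrite ht0 /p0 rate_hh; field; rewrite ?gt_eqF //.
have Jt : forall i, J%:R * t0 i < T.
  move=> i; have [_ [_ [le _]]] := Hi i.
  have cyc0 : 0 < cycles (Z i) (G i) d%:R J / fmax i.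
    rewrite divr_gt0 // /cycles; apply: (@lt_le_trans _ _ (Z i * d%:R)).
      by rewrite mulr_gt0.
    rewrite lerDl mulr_ge0 // mulr_ge0 //; lra.
  have : J%:R * t0 i <= J%:R * tmax T (Z i) (G i) (fmax i) d%:R J.
    by rewrite ler_pM2l //; lra.
  rewrite /tmax [X in _ <= X]mulrC divfK; last by rewrite gt_eqF //; lra.
  lra.
split => // i.
have [bp [t0p [le hr]]] := Hi i.
have D0 : 0 < T - J%:R * t0 i by rewrite subr_gt0.
have cyc0 : 0 < cycles (Z i) (G i) d%:R J.
  rewrite /cycles; apply: (@lt_le_trans _ _ (Z i * d%:R)).
    by rewrite mulr_gt0.
  rewrite lerDl mulr_ge0 // mulr_ge0 //; lra.
have hf : cycles (Z i) (G i) d%:R J / f0 i = T - J%:R * t0 i.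
  by rewrite /f0 invf_div mulrCA mulfV ?gt_eqF // mulr1.
split; first by rewrite hf; lra.
split; first by rewrite hr.
split; first exact: (proj1 hb0feas).
split; first by rewrite /p0 lexx andbT ltW.
split; last by [].
apply/andP; split; first by rewrite /f0 divr_gt0.
rewrite /f0 ler_pdivrMr // -ler_pdivrMl // mulrC.
have : J%:R * t0 i <= J%:R * tmax T (Z i) (G i) (fmax i) d%:R J.
  by rewrite ler_pM2l //; lra.
rewrite /tmax [X in _ <= X]mulrC divfK; last by rewrite gt_eqF //; lra.
lra.
Qed.
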